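(* Let $K\ge1$ be an integer, $n\ge0$, let $P_n(x,y),Q_n(x,y)$ be real polynomials of degree $n$, and let $\mathrm{a}_1,\ldots,\mathrm{a}_K$ be pairwise distinct nonzero real numbers. For $0<r<\min_j|\mathrm{a}_j|$ let $\gamma_r=\{(x,y):x^2+y^2=r^2\}$ and \[ I(r)=\int_{\gamma_r}\frac{Q_n(x,y)\,dx-P_n(x,y)\,dy}{\prod_{j=1}^K(x-\mathrm{a}_j)}. \] Let $\widetilde K=\operatorname{card}\{|\mathrm{a}_1|,\ldots,|\mathrm{a}_K|\}$ and let $\widetilde{\mathrm{a}}_1,\ldots,\widetilde{\mathrm{a}}_{\widetilde K}$ be the distinct values of $\{|\mathrm{a}_1|,\ldots,|\mathrm{a}_K|\}$. Then there exist real polynomials $S^j(\rho)$, $j=1,\ldots,\widetilde K$, of degree at most $[(n-1)/2]+1$ and a real polynomial $T(\rho)$ of degree at most $[n/2]$ such that for all $0<r<\min_j|\mathrm{a}_j|$, \[ I(r)=\sum_{j=1}^{\widetilde K}\frac{S^j(r^2)}{\sqrt{\widetilde{\mathrm{a}}_j^2-r^2}}+T(r^2). \]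
   Context: $[s]$ denotes the integer part of $s$. The circle $\gamma_r$ is parametrized by $(r\cos\theta,r\sin\theta)$, $\theta\in[0,2\pi]$. *)

(* Defs.v *)
From Stdlib Require Import Reals List.
From Coquelicot Require Import Coquelicot.
Open Scope R_scope.

Fixpoint sumR (n : nat) (f : nat -> R) : R :=
  match n with O => 0 | S m => sumR m f + f m end.

Fixpoint prodR (l : list R) (f : R -> R) : R :=
  match l with nil => 1 | cons a l' => f a * prodR l' f end.

(* Real bivariate polynomial of total degree at most n, with coefficients c i j
   (monomial x^i y^j, i + j <= n). *)
Definition poly2_eval (n : nat) (c : nat -> nat -> R) (x y : R) : R :=
  sumR (S n) (fun i => sumR (S (n - i)) (fun j => c i j * x ^ i * y ^ j)).

Definition poly_eval (d : nat) (c : nat -> R) (t : R) : R :=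
  sumR (S d) (fun k => c k * t ^ k).

(* I(r) = \int_{gamma_r} (Q dx - P dy) / prod_j (x - a_j),
   gamma_r parametrized by (r cos th, r sin th), th in [0, 2 pi]. *)
Definition I_line (n : nat) (P Q : nat -> nat -> R) (a : list R) (r : R) : R :=
  RInt (fun th =>
          let x := r * cos th in let y := r * sin th in
          (poly2_eval n Q x y * (- r * sin th) - poly2_eval n P x y * (r * cos th))
          / prodR a (fun aj => x - aj))
       0 (2 * PI).

Definition abs_values (a : list R) : list R := nodup Req_EM_T (map Rabs a).

(* Main.v *)
Require Import Defs.
From Stdlib Require Import Reals List Lia Lra.
From Coquelicot Require Import Coquelicot.
Open Scope R_scope.

Lemma sumR_ext n f g : (forall k, (k < n)%nat -> f k = g k) -> sumR n f = sumR n g.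
Proof. induction n; simpl; intros; auto. rewrite IHn by (intros; apply H; lia). rewrite H by lia. auto. Qed.
Lemma sumR_plus n f g : sumR n (fun k => f k + g k) = sumR n f + sumR n g.
Proof. induction n; simpl; [lra|]. rewrite IHn; lra. Qed.
Lemma sumR_scal n c f : c * sumR n f = sumR n (fun k => c * f k).
Proof. induction n; simpl; [lra|]. rewrite <- IHn; lra. Qed.
Lemma sumR_zero n : sumR n (fun _ => 0) = 0.
Proof. induction n; simpl; [lra|]. rewrite IHn; lra. Qed.
Lemma sumR_shift n f : sumR (S n) f = f O + sumR n (fun k => f (S k)).
Proof. induction n; simpl; [lra|]. simpl in IHn. rewrite IHn. lra. Qed.
Lemma sumR_pad c c' f : (c <= c')%nat -> (forall k, (c <= k < c')%nat -> f k = 0) -> sumR c' f = sumR c f.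
Proof. induction c'; intros. assert (c = O) by lia; subst; auto.
  destruct (Nat.eq_dec c (S c')). subst; auto. simpl. rewrite IHc'. rewrite (H0 c') by lia. lra. lia. intros; apply H0; lia. Qed.
Lemma sumR_single n idx g : (idx < n)%nat -> sumR n (fun j => if Nat.eq_dec j idx then g j else 0) = g idx.
Proof. induction n; intros. lia. simpl. destruct (Nat.eq_dec n idx).
  subst. rewrite (sumR_ext _ _ (fun _ => 0)). rewrite sumR_zero; lra. intros. destruct Nat.eq_dec; auto; lia.
  rewrite IHn by lia. lra. Qed.
Lemma sumR_div n f d : sumR n f / d = sumR n (fun k => f k / d).
Proof. unfold Rdiv. rewrite Rmult_comm, sumR_scal. apply sumR_ext; intros; lra. Qed.

Definition Dom (a : list R) (r : R) := 0 < r /\ forall aj, In aj a -> r < Rabs aj.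

Definition Good (a : list R) (c1 c2 : nat) (f : R -> R) :=
  exists (S : nat -> nat -> R) (T : nat -> R), forall r, Dom a r ->
    f r = sumR (length (abs_values a)) (fun j => sumR c1 (fun k => S j k * (r^2)^k) / sqrt (nth j (abs_values a) 0 ^ 2 - r^2))
          + sumR c2 (fun k => T k * (r^2)^k).

Lemma Good_ext a c1 c2 f g : (forall r, Dom a r -> f r = g r) -> Good a c1 c2 g -> Good a c1 c2 f.
Proof. intros H [S [T HG]]. exists S, T. intros. rewrite H by auto. auto. Qed.

Lemma Good_mono a c1 c2 c1' c2' f : (c1 <= c1')%nat -> (c2 <= c2')%nat -> Good a c1 c2 f -> Good a c1' c2' f.
Proof. intros H1 H2 [S [T HG]].
  exists (fun j k => if Nat.ltb k c1 then S j k else 0), (fun k => if Nat.ltb k c2 then T k else 0).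
  intros r Hr. rewrite HG by auto. f_equal.
  - apply sumR_ext; intros. f_equal. rewrite (sumR_pad c1 c1'); auto.
    apply sumR_ext; intros. destruct (Nat.ltb_spec k0 c1). auto. lia.
    intros. destruct (Nat.ltb_spec k0 c1). lia. lra.
  - rewrite (sumR_pad c2 c2'); auto.
    apply sumR_ext; intros. destruct (Nat.ltb_spec k c2). auto. lia.
    intros. destruct (Nat.ltb_spec k c2). lia. lra.
Qed.

Lemma Good_zero a c1 c2 : Good a c1 c2 (fun _ => 0).
Proof. exists (fun _ _ => 0), (fun _ => 0). intros.
  rewrite (sumR_ext _ _ (fun _ => 0)). rewrite (sumR_ext c2 _ (fun _ => 0)). rewrite !sumR_zero; lra.
  intros; lra. intros. rewrite (sumR_ext _ _ (fun _ => 0)). rewrite sumR_zero. unfold Rdiv; lra. intros; lra. Qed.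

Lemma Good_plus a c1 c2 f g : Good a c1 c2 f -> Good a c1 c2 g -> Good a c1 c2 (fun r => f r + g r).
Proof. intros [S [T HG]] [S' [T' HG']].
  exists (fun j k => S j k + S' j k), (fun k => T k + T' k). intros r Hr. rewrite HG, HG' by auto.
  rewrite (sumR_ext c2 (fun k => (T k + T' k) * _) (fun k => T k * (r^2)^k + T' k * (r^2)^k)) by (intros; lra).
  rewrite sumR_plus.
  rewrite (sumR_ext _ (fun j => sumR c1 (fun k => (S j k + S' j k) * _) / _)
    (fun j => sumR c1 (fun k => S j k * (r^2)^k) / sqrt (nth j (abs_values a) 0 ^ 2 - r^2) +
              sumR c1 (fun k => S' j k * (r^2)^k) / sqrt (nth j (abs_values a) 0 ^ 2 - r^2))).
  rewrite sumR_plus. lra.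
  intros. unfold Rdiv. rewrite <- Rmult_plus_distr_r. f_equal. rewrite <- sumR_plus.
  apply sumR_ext; intros; lra. Qed.

Lemma Good_scal a c1 c2 c f : Good a c1 c2 f -> Good a c1 c2 (fun r => c * f r).
Proof. intros [S [T HG]].
  exists (fun j k => c * S j k), (fun k => c * T k). intros r Hr. rewrite HG by auto.
  rewrite Rmult_plus_distr_l, !sumR_scal. f_equal; apply sumR_ext; intros.
  unfold Rdiv. rewrite <- Rmult_assoc, sumR_scal. f_equal. apply sumR_ext; intros; lra.
  lra. Qed.

Lemma Good_minus a c1 c2 f g : Good a c1 c2 f -> Good a c1 c2 g -> Good a c1 c2 (fun r => f r - g r).
Proof. intros. apply (Good_ext _ _ _ _ (fun r => f r + (-1) * g r)). intros; lra.
  apply Good_plus; auto. apply Good_scal; auto. Qed.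

Lemma Good_sumR a c1 c2 n (g : nat -> R -> R) : (forall k, (k < n)%nat -> Good a c1 c2 (g k)) ->
  Good a c1 c2 (fun r => sumR n (fun k => g k r)).
Proof. induction n; intros. apply Good_zero. simpl. apply Good_plus. apply IHn; intros; apply H; lia. apply H; lia. Qed.

Lemma Good_rho a c1 c2 f : Good a c1 c2 f -> Good a (S c1) (S c2) (fun r => r^2 * f r).
Proof. intros [S [T HG]].
  exists (fun j k => match k with O => 0 | S k' => S j k' end), (fun k => match k with O => 0 | S k' => T k' end).
  intros r Hr. rewrite HG by auto. rewrite Rmult_plus_distr_l, sumR_scal. f_equal.
  - apply sumR_ext; intros. rewrite sumR_shift. unfold Rdiv. rewrite <- Rmult_assoc. f_equal.
    rewrite sumR_scal. rewrite Rmult_0_l, Rplus_0_l. apply sumR_ext; intros. simpl. ring.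
  - rewrite sumR_shift, Rmult_0_l, Rplus_0_l, sumR_scal. apply sumR_ext; intros. simpl. ring.
Qed.

Lemma Good_mon a m C : Good a 0 (S m) (fun r => C * (r^2)^m).
Proof. exists (fun _ _ => 0), (fun k => if Nat.eq_dec k m then C else 0). intros. simpl sumR at 2.
  rewrite (sumR_ext _ _ (fun _ => 0)) by (intros; simpl; unfold Rdiv; lra). rewrite sumR_zero.
  rewrite (sumR_ext (S m) _ (fun k => if Nat.eq_dec k m then C * (r^2)^k else 0)).
  rewrite sumR_single by lia. lra. intros. destruct Nat.eq_dec; lra. Qed.

Lemma Good_sq a idx C : (idx < length (abs_values a))%nat ->
  Good a 1 0 (fun r => C / sqrt (nth idx (abs_values a) 0 ^ 2 - r^2)).
Proof. intros Hi. exists (fun j k => if Nat.eq_dec j idx then C else 0), (fun _ => 0). intros. simpl sumR at 2.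
  rewrite (sumR_ext _ _ (fun j => if Nat.eq_dec j idx then C / sqrt (nth j (abs_values a) 0 ^ 2 - r^2) else 0)).
  rewrite sumR_single by auto. simpl. lra. intros. simpl. destruct Nat.eq_dec. lra. unfold Rdiv; lra. Qed.

Lemma cm (f g : R -> R) x : continuous f x -> continuous g x -> continuous (fun t => f t * g t) x.
Proof. intros. apply (continuous_mult (K:=R_AbsRing) f g); auto. Qed.
Lemma cp (f g : R -> R) x : continuous f x -> continuous g x -> continuous (fun t => f t + g t) x.
Proof. intros. apply (continuous_plus (V:=R_NormedModule) f g); auto. Qed.
Lemma cminus (f g : R -> R) x : continuous f x -> continuous g x -> continuous (fun t => f t - g t) x.
Proof. intros. apply (continuous_minus (V:=R_NormedModule) f g); auto. Qed.
Lemma cc (c : R) x : continuous (fun _ : R => c) x.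
Proof. apply continuous_const. Qed.
Lemma cid x : continuous (fun t : R => t) x.
Proof. apply continuous_id. Qed.
Lemma cpow (f : R -> R) n x : continuous f x -> continuous (fun t => f t ^ n) x.
Proof. intros. induction n; simpl. apply cc. apply cm; auto. Qed.
Lemma ccos x : continuous cos x. Proof. apply continuous_cos. Qed.
Lemma csin x : continuous sin x. Proof. apply continuous_sin. Qed.
Lemma cinv (f : R -> R) x : continuous f x -> f x <> 0 -> continuous (fun t => / f t) x.
Proof. intros. apply continuous_Rinv_comp; auto. Qed.

Lemma prodR_neq0 l g : (forall aj, In aj l -> g aj <> 0) -> prodR l g <> 0.
Proof. induction l; simpl; intros. lra. apply Rmult_integral_contrapositive_currified; auto. Qed.

Lemma cprod l (g : R -> R -> R) x : (forall aj, In aj l -> continuous (fun t => g aj t) x) ->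
  continuous (fun t => prodR l (fun aj => g aj t)) x.
Proof. induction l; simpl; intros. apply cc. apply cm; auto. Qed.

Definition fF (a : list R) (u v : nat) (r th : R) :=
  (r*cos th)^u * (r*sin th)^v / prodR a (fun aj => r*cos th - aj).
Definition F (a : list R) (u v : nat) (r : R) := RInt (fun th => fF a u v r th) 0 (2*PI).

Lemma rcos_ne a r th aj : Dom a r -> In aj a -> r * cos th - aj <> 0.
Proof. intros [Hr Ha] Hin. specialize (Ha aj Hin). pose proof (COS_bound th).
  intro E. assert (aj = r * cos th) by lra. subst aj.
  rewrite Rabs_mult, (Rabs_right r) in Ha by lra.
  assert (Rabs (cos th) <= 1) by (apply Rabs_le; lra). nra. Qed.

Lemma cont_fF a u v r th : Dom a r -> continuous (fF a u v r) th.
Proof. intros D. unfold fF, Rdiv. apply cm. apply cm; apply cpow; apply cm; [apply cc|apply ccos|apply cc|apply csin].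
  apply cinv. apply cprod. intros. apply cminus. apply cm; [apply cc|apply ccos]. apply cc.
  apply prodR_neq0. intros; eapply rcos_ne; eauto. Qed.

Lemma exR (f : R -> R) a b : (forall x, continuous f x) -> ex_RInt f a b.
Proof. intros. apply (ex_RInt_continuous (V:=R_CompleteNormedModule)). intros; auto. Qed.

Lemma RInt_plus' (f g : R -> R) a b : ex_RInt f a b -> ex_RInt g a b ->
  RInt (fun x => f x + g x) a b = RInt f a b + RInt g a b.
Proof. intros. apply (RInt_plus (V:=R_CompleteNormedModule)); auto. Qed.
Lemma RInt_scal' (f : R -> R) a b c : ex_RInt f a b ->
  RInt (fun x => c * f x) a b = c * RInt f a b.
Proof. intros. apply (RInt_scal (V:=R_CompleteNormedModule)); auto. Qed.
Lemma RInt_minus' (f g : R -> R) a b : ex_RInt f a b -> ex_RInt g a b ->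
  RInt (fun x => f x - g x) a b = RInt f a b - RInt g a b.
Proof. intros. apply (RInt_minus (V:=R_CompleteNormedModule)); auto. Qed.
Lemma RInt_opp' (f : R -> R) a b : ex_RInt f a b ->
  RInt (fun x => - f x) a b = - RInt f a b.
Proof. intros. apply (RInt_opp (V:=R_CompleteNormedModule)); auto. Qed.
Lemma ex_RInt_plus' (f g : R -> R) a b : ex_RInt f a b -> ex_RInt g a b -> ex_RInt (fun x => f x + g x) a b.
Proof. intros. apply (ex_RInt_plus (V:=R_NormedModule)); auto. Qed.

Lemma ex_RInt_sumR n (f : nat -> R -> R) a b : (forall k, (k < n)%nat -> ex_RInt (f k) a b) ->
  ex_RInt (fun x => sumR n (fun k => f k x)) a b.
Proof. induction n; simpl; intros. apply (ex_RInt_const (V:=R_NormedModule)). apply ex_RInt_plus'.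
  apply IHn; intros; apply H; lia. apply H; lia. Qed.

Lemma RInt_sumR n (f : nat -> R -> R) a b : (forall k, (k < n)%nat -> ex_RInt (f k) a b) ->
  RInt (fun x => sumR n (fun k => f k x)) a b = sumR n (fun k => RInt (f k) a b).
Proof. induction n; simpl; intros. rewrite (RInt_const (V:=R_CompleteNormedModule)). simpl. unfold scal; simpl. unfold mult; simpl. ring.
  rewrite RInt_plus'. rewrite IHn. auto. intros; apply H; lia. apply ex_RInt_sumR. intros; apply H; lia. apply H; lia. Qed.
Lemma RInt_ext' (f g : R -> R) a b : (forall x, Rmin a b < x < Rmax a b -> f x = g x) -> RInt f a b = RInt g a b.
Proof. apply RInt_ext. Qed.
Ltac toR := match goal with |- @eq _ ?x ?y => change (@eq R x y) end.
Ltac cont := repeat (first [apply cc | apply cid | apply ccos | apply csin | apply cm | apply cp | apply cminus | apply cpow | apply cinv]).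

Lemma RInt_refl0 (f : R -> R) : (forall x, continuous f x) -> (forall y, f (2*PI - y) = - f y) ->
  RInt f 0 (2*PI) = 0.
Proof. intros Hc Hs.
  pose proof (RInt_comp_lin (V:=R_CompleteNormedModule) f (-1) (2*PI) 0 (2*PI) (exR _ _ _ Hc)) as H.
  replace (-1 * 0 + 2*PI) with (2*PI) in H by ring. replace (-1 * (2*PI) + 2*PI) with 0 in H by ring.
  assert (E : RInt f 0 (2*PI) = RInt f (2*PI) 0).
  { rewrite <- H. symmetry. apply RInt_ext. intros. unfold scal; simpl; unfold mult; simpl. replace (-1 * x + 2*PI) with (2*PI - x) by ring. rewrite Hs. ring. }
  clear H. rename E into H. rewrite <- (opp_RInt_swap (V:=R_CompleteNormedModule) f 0 (2*PI)) in H by (apply exR; auto).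
  unfold opp in H; simpl in H. lra. Qed.

Lemma RInt_shift0 (f : R -> R) : (forall x, continuous f x) -> (forall y, f (y + PI) = - f y) ->
  RInt f 0 (2*PI) = 0.
Proof. intros Hc Hs.
  pose proof (RInt_comp_lin (V:=R_CompleteNormedModule) f 1 PI 0 PI (exR _ _ _ Hc)) as H.
  replace (1 * 0 + PI) with PI in H by ring. replace (1 * PI + PI) with (2*PI) in H by ring.
  assert (E : RInt f PI (2*PI) = - RInt f 0 PI).
  { rewrite <- H. rewrite <- RInt_opp' by (apply exR; auto). apply RInt_ext. intros. unfold scal; simpl; unfold mult; simpl. rewrite !Rmult_1_l, Hs. reflexivity. }
  rewrite <- (RInt_Chasles (V:=R_CompleteNormedModule) f 0 PI (2*PI)) by (apply exR; auto).
  unfold plus; simpl. rewrite E. ring. Qed.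

Lemma pow_odd_opp x v : Nat.Odd v -> (- x)^v = - x^v.
Proof. intros [k ->]. replace (2*k+1)%nat with (S (2*k)) by lia. rewrite <- (Rmult_1_l x) at 1. rewrite Ropp_mult_distr_l, Rpow_mult_distr, pow_1_odd. ring. Qed.
Lemma pow_even_opp x v : Nat.Even v -> (- x)^v = x^v.
Proof. intros [k ->]. rewrite <- (Rmult_1_l x) at 1. rewrite Ropp_mult_distr_l, Rpow_mult_distr, pow_1_even. ring. Qed.

Lemma F_odd a u v r : Dom a r -> Nat.Odd v -> F a u v r = 0.
Proof. intros D Ho. unfold F. apply RInt_refl0. intros; apply cont_fF; auto.
  intros y. unfold fF. rewrite cos_minus, sin_minus, cos_2PI, sin_2PI.
  replace (1 * cos y + 0 * sin y) with (cos y) by ring. replace (0 * cos y - 1 * sin y) with (- sin y) by ring.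
  replace (r * - sin y) with (- (r * sin y)) by ring. rewrite pow_odd_opp by auto. unfold Rdiv; ring. Qed.

Lemma Rint_cospow_odd r w : Nat.Odd w -> RInt (fun th => (r * cos th)^w) 0 (2*PI) = 0.
Proof. intros Ho. apply RInt_shift0. intros; apply cpow; apply cm; [apply cc|apply ccos].
  intros y. rewrite neg_cos. replace (r * - cos y) with (- (r * cos y)) by ring. apply pow_odd_opp; auto. Qed.

Lemma Good_cospow a w : Good a 0 (S (w/2)) (fun r => RInt (fun th => (r * cos th)^w) 0 (2*PI)).
Proof. destruct (Nat.Even_or_Odd w) as [[m ->]|Ho].
  - replace (2*m/2)%nat with m by (rewrite Nat.mul_comm, Nat.div_mul; lia).
    apply (Good_ext _ _ _ _ (fun r => RInt (fun th => cos th ^ (2*m)) 0 (2*PI) * (r^2)^m)).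
    2: apply Good_mon.
    intros r D. rewrite (Rmult_comm (RInt _ _ _)), <- RInt_scal'. apply RInt_ext. intros. rewrite Rpow_mult_distr, pow_mult. reflexivity.
    apply exR. intros; apply cpow; apply ccos.
  - apply (Good_ext _ _ _ _ (fun _ => 0)). intros; apply Rint_cospow_odd; auto. apply Good_zero. Qed.

Lemma key_deriv A B th : 0 < A -> Rabs B < A ->
  let s := sqrt (A^2 - B^2) in let be := B / (A + s) in
  is_derive (fun t => (t + 2 * atan (be * sin t / (1 - be * cos t))) / s) th (/ (A - B * cos th)).
Proof. intros HA HB s be.
  assert (Hs2 : s * s = A^2 - B^2). { unfold s. apply sqrt_sqrt. pose proof (Rabs_pos B). 
     assert (B^2 = Rabs B ^2) by (rewrite <- (pow2_abs B); auto). nra. }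
  assert (Hs : 0 < s). { unfold s. apply sqrt_lt_R0. assert (B^2 = Rabs B ^2) by (rewrite <- (pow2_abs B); auto). pose proof (Rabs_pos B). nra. }
  assert (Hbe : Rabs be < 1). { unfold be. rewrite Rabs_div by lra. rewrite (Rabs_right (A+s)) by lra.
     apply (Rmult_lt_reg_r (A+s)); [lra|]. unfold Rdiv. rewrite Rmult_assoc, Rinv_l by lra. lra. }
  assert (Hc : 1 - be * cos th > 0). { pose proof (COS_bound th). assert (Rabs (be * cos th) < 1).
     rewrite Rabs_mult. assert (Rabs (cos th) <= 1) by (apply Rabs_le; lra). pose proof (Rabs_pos be). pose proof (Rabs_pos (cos th)). nra.
     apply Rabs_def2 in H0. lra. }
  assert (Hkey : (1 - be^2) * (A - B * cos th) = s * (1 + be^2 - 2 * be * cos th)).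
  { unfold be. field_simplify_eq. 2: lra. assert (B^2 = A^2 - s*s) by lra.
    replace (B^3) with (B * B^2) by ring. replace (B^2) with (A^2 - s*s) by lra. ring. }
  assert (Hsc : sin th ^2 = 1 - cos th ^2) by (rewrite <- (sin2_cos2 th); unfold Rsqr; ring).
  assert (HD : 1 + be^2 - 2*be*cos th > 0). { assert (be^2 < 1). { rewrite <- (pow2_abs be). pose proof (Rabs_pos be). nra. }
     pose proof (COS_bound th). nra. }
  assert (HAB : A - B * cos th <> 0). { intro E. rewrite E in Hkey. nra. }
  auto_derive. lra.
  set (c := cos th) in *. set (sn := sin th) in *.
  field_simplify_eq. rewrite Hsc. transitivity ((1 - be^2)*(A - B*c)). ring. rewrite Hkey. ring.
  split; [auto|]. split; [lra|]. split; [lra|]. nra.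
Qed.

Lemma int_key A B : 0 < A -> Rabs B < A ->
  RInt (fun th => / (A - B * cos th)) 0 (2*PI) = 2*PI / sqrt (A^2 - B^2).
Proof. intros HA HB. apply (is_RInt_unique (V:=R_CompleteNormedModule)).
  set (s := sqrt (A^2 - B^2)). set (be := B / (A + s)).
  assert (HAB : forall th, A - B * cos th <> 0).
  { intros th E. pose proof (COS_bound th). assert (Rabs (B * cos th) < A).
    rewrite Rabs_mult. assert (Rabs (cos th) <= 1) by (apply Rabs_le; lra). pose proof (Rabs_pos B). pose proof (Rabs_pos (cos th)). nra.
    apply Rabs_def2 in H0. lra. }
  set (G := fun t => (t + 2 * atan (be * sin t / (1 - be * cos t))) / s).
  pose proof (is_RInt_derive (V:=R_CompleteNormedModule) G (fun th => / (A - B * cos th)) 0 (2*PI)) as H.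
  assert (E : minus (G (2*PI)) (G 0) = 2*PI / s).
  { unfold G, minus, plus, opp; simpl. rewrite sin_2PI, sin_0, !Rmult_0_r. unfold Rdiv. rewrite !Rmult_0_l, atan_0. unfold s. change (@eq R ((2 * PI + 2 * 0) * / sqrt (A^2 - B^2) + - ((0 + 2 * 0) * / sqrt (A^2-B^2))) (2 * PI * / sqrt (A^2 - B^2))). ring. }
  rewrite <- E. apply H. intros. apply key_deriv; auto.
  intros. apply cinv. apply cminus. apply cc. apply cm. apply cc. apply ccos. apply HAB.
Qed.

Lemma int_recip r aj : 0 < r -> r < Rabs aj ->
  RInt (fun th => / (r * cos th - aj)) 0 (2*PI) = (if Rlt_dec 0 aj then - (2*PI) else 2*PI) / sqrt (aj^2 - r^2).
Proof. intros Hr Ha. destruct (Rlt_dec 0 aj).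
  - rewrite Rabs_right in Ha by lra.
    rewrite (RInt_ext' _ (fun th => - / (aj - r * cos th))).
    rewrite RInt_opp'. rewrite int_key. toR. unfold Rdiv; ring. lra. rewrite Rabs_right; lra.
    apply exR. intros. apply cinv. apply cminus. apply cc. apply cm. apply cc. apply ccos.
    intro E. pose proof (COS_bound x). nra.
    intros. pose proof (COS_bound x). toR. field. nra.
  - assert (aj < 0). { destruct (Req_dec aj 0). subst. rewrite Rabs_R0 in Ha. lra. lra. }
    rewrite Rabs_left in Ha by lra.
    rewrite (RInt_ext' _ (fun th => / (-aj - (-r) * cos th))).
    rewrite int_key. f_equal. f_equal. ring. lra. rewrite Rabs_left; lra.
    intros. f_equal. ring.
Qed.

Lemma PF0 a : a <> nil -> NoDup a -> exists be : nat -> R, forall x, (forall aj, In aj a -> x <> aj) ->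
  / prodR a (fun aj => x - aj) = sumR (length a) (fun j => be j / (x - nth j a 0)).
Proof. induction a as [|b a' IH]; intros Hn Hd. congruence.
  apply NoDup_cons_iff in Hd as [Hb Hd].
  destruct a' as [|c a''].
  - exists (fun _ => 1). intros. simpl. field. intro E. apply (H b); simpl; auto. lra.
  - destruct IH as [be Hbe]; auto. congruence.
    set (a' := c :: a'') in *. clearbody a'.
    exists (fun j => match j with O => sumR (length a') (fun j => be j / (b - nth j a' 0))
                            | S j => - (be j / (b - nth j a' 0)) end).
    intros x Hx. change (length (b :: a')) with (S (length a')). rewrite sumR_shift.
    simpl prodR. simpl nth. rewrite Rinv_mult. rewrite Hbe by (intros; apply Hx; simpl; auto).
    rewrite sumR_scal. rewrite sumR_div.
    assert (Hxb : x - b <> 0) by (intro E; apply (Hx b); simpl; auto; lra).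
    rewrite <- sumR_plus. apply sumR_ext. intros j Hj.
    assert (Hin : In (nth j a' 0) a') by (apply nth_In; auto).
    assert (Hbc : b - nth j a' 0 <> 0) by (intro E; apply Hb; replace b with (nth j a' 0) by lra; auto).
    assert (Hxc : x - nth j a' 0 <> 0) by (intro E; apply (Hx (nth j a' 0)); simpl; auto; lra).
    field. auto.
Qed.

Lemma PFu a u : a <> nil -> NoDup a -> exists (h : nat -> R) (be : nat -> R), forall x, (forall aj, In aj a -> x <> aj) ->
  x ^ u / prodR a (fun aj => x - aj) = sumR u (fun k => h k * x ^ k) + sumR (length a) (fun j => be j / (x - nth j a 0)).
Proof. intros Hn Hd. induction u.
  - destruct (PF0 a Hn Hd) as [be Hbe]. exists (fun _ => 0), be. intros. simpl. rewrite <- Hbe by auto. unfold Rdiv. ring.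
  - destruct IHu as [h [be Hh]].
    exists (fun k => match k with O => sumR (length a) be | S k => h k end), (fun j => be j * nth j a 0).
    intros x Hx. rewrite sumR_shift.
    replace (x ^ S u / prodR a (fun aj => x - aj)) with (x * (x ^ u / prodR a (fun aj => x - aj))) by (simpl; unfold Rdiv; ring).
    rewrite Hh by auto. rewrite Rmult_plus_distr_l, !sumR_scal.
    rewrite (sumR_ext (length a) (fun k => x * (be k / (x - nth k a 0))) (fun k => be k + be k * nth k a 0 / (x - nth k a 0))).
    rewrite sumR_plus. rewrite (sumR_ext u (fun k => h k * x ^ S k) (fun k => x * (h k * x ^ k))) by (intros; simpl; ring). ring.
    intros j Hj. assert (x - nth j a 0 <> 0). { intro E. apply (Hx (nth j a 0)). apply nth_In; auto. lra. } field. auto.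
Qed.

Lemma abs_in a aj : In aj a -> exists idx, (idx < length (abs_values a))%nat /\ nth idx (abs_values a) 0 = Rabs aj.
Proof. intros H. assert (In (Rabs aj) (abs_values a)). { unfold abs_values. apply nodup_In. apply in_map; auto. }
  apply In_nth with (d := 0) in H0. destruct H0 as [idx [? ?]]. eauto. Qed.

Ltac d2 x := pose proof (Nat.div_mod_eq x 2); pose proof (Nat.mod_upper_bound x 2 ltac:(lia)).

Lemma Good_base a u : a <> nil -> NoDup a -> Good a 1 ((u+1)/2) (F a u 0).
Proof. intros Hn Hd. destruct (PFu a u Hn Hd) as [h [be Hpf]].
  apply (Good_ext _ _ _ _ (fun r => sumR u (fun k => h k * RInt (fun th => (r * cos th)^k) 0 (2*PI)) +
     sumR (length a) (fun j => be j * RInt (fun th => / (r * cos th - nth j a 0)) 0 (2*PI)))).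
  { intros r D. unfold F.
    assert (Hne : forall th j, (j < length a)%nat -> r * cos th - nth j a 0 <> 0).
    { intros. apply (rcos_ne a); auto. apply nth_In; auto. }
    rewrite (RInt_ext' _ (fun th => sumR u (fun k => h k * (r * cos th)^k) + sumR (length a) (fun j => be j * / (r * cos th - nth j a 0)))).
    rewrite RInt_plus'. 
    rewrite (RInt_sumR u (fun k th => h k * (r * cos th)^k)).
    rewrite (RInt_sumR (length a) (fun j th => be j * / (r * cos th - nth j a 0))).
    f_equal; apply sumR_ext; intros; apply RInt_scal'.
    all: try (intros; apply exR; intros; cont; apply Hne; auto; fail).
    all: try (intros; apply exR; intros; cont; fail).
    all: try (apply ex_RInt_sumR; intros; apply exR; intros; cont; try (apply Hne; auto); fail).
    intros th _. unfold fF. simpl pow at 2. rewrite Rmult_1_r. rewrite Hpf. reflexivity.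
      intros aj Hin E. apply (rcos_ne a r th aj D Hin). lra. }
  apply Good_plus.
  - apply Good_sumR. intros k Hk. apply Good_scal. apply (Good_mono _ 0 (S (k/2))). lia.
    d2 k. d2 (u+1)%nat. lia. apply Good_cospow.
  - apply Good_sumR. intros j Hj. apply Good_scal.
    assert (Hin : In (nth j a 0) a) by (apply nth_In; auto).
    destruct (abs_in a _ Hin) as [idx [Hidx Hv]].
    apply (Good_ext _ _ _ _ (fun r => (if Rlt_dec 0 (nth j a 0) then - (2*PI) else 2*PI) / sqrt (nth idx (abs_values a) 0 ^ 2 - r^2))).
    intros r [Hr Ha]. rewrite int_recip; auto. rewrite Hv, <- pow2_abs. reflexivity.
    apply (Good_mono _ 1 0); [lia|lia|]. apply Good_sq; auto.
Qed.

Lemma F_rec a u m r : Dom a r -> F a u (2*m+2) r = r^2 * F a u (2*m) r - F a (u+2) (2*m) r.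
Proof. intros D. unfold F. rewrite <- RInt_scal', <- RInt_minus'.
  apply RInt_ext'. intros th _. unfold fF. rewrite !pow_add.
  assert (Hs : (r * sin th)^2 = r^2 - (r * cos th)^2).
  { pose proof (sin2_cos2 th). unfold Rsqr in H. replace (r^2) with (r^2 * (sin th * sin th + cos th * cos th)) by (rewrite H; ring). ring. }
  rewrite Hs. unfold Rdiv. ring.
  all: apply exR; intros; first [apply cont_fF; auto | apply cm; [apply cc | apply cont_fF; auto]].
Qed.



Lemma Good_even a m : a <> nil -> NoDup a -> forall u, Good a (S m) ((u + 2*m + 1)/2) (F a u (2*m)).
Proof. intros Hn Hd. induction m; intros u.
  - replace (u + 2*0 + 1)%nat with (u+1)%nat by lia. apply Good_base; auto.
  - apply (Good_ext _ _ _ _ (fun r => r^2 * F a u (2*m) r - F a (u+2) (2*m) r)).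
    intros r D. replace (2 * S m)%nat with (2*m+2)%nat by lia. apply F_rec; auto.
    apply Good_minus.
    + apply (Good_mono _ (S (S m)) (S ((u + 2*m + 1)/2))). lia. d2 (u+2*m+1)%nat. d2 (u+2*S m+1)%nat. lia.
      apply Good_rho. apply IHm.
    + apply (Good_mono _ (S m) ((u + 2 + 2*m + 1)/2)). lia. d2 (u+2+2*m+1)%nat. d2 (u+2*S m+1)%nat. lia.
      apply IHm.
Qed.

Lemma Good_F a n u v : a <> nil -> NoDup a -> (u + v <= n + 1)%nat -> Good a (S ((n+1)/2)) (S (n/2)) (F a u v).
Proof. intros Hn Hd Huv. destruct (Nat.Even_or_Odd v) as [[m ->]|Ho].
  - apply (Good_mono _ (S m) ((u + 2*m + 1)/2)). d2 (n+1)%nat. lia. d2 (u+2*m+1)%nat. d2 n. lia.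
    apply Good_even; auto.
  - apply (Good_ext _ _ _ _ (fun _ => 0)). intros; apply F_odd; auto. apply Good_zero.
Qed.

Lemma sumR_comb n f g c d e : (sumR n f * c - sumR n g * d) * e = sumR n (fun k => (f k * c - g k * d) * e).
Proof. induction n; simpl. ring. rewrite <- IHn. ring. Qed.

Lemma ex_fF a u v r : Dom a r -> ex_RInt (fun th => fF a u v r th) 0 (2*PI).
Proof. intros. apply exR. intros. apply cont_fF; auto. Qed.
Lemma ex_scal' (f : R -> R) c a b : ex_RInt f a b -> ex_RInt (fun x => c * f x) a b.
Proof. intros. apply (ex_RInt_scal (V:=R_NormedModule)); auto. Qed.
Lemma ex_minus' (f g : R -> R) a b : ex_RInt f a b -> ex_RInt g a b -> ex_RInt (fun x => f x - g x) a b.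
Proof. intros. apply (ex_RInt_minus (V:=R_NormedModule)); auto. Qed.

Lemma I_expand n P Q a r : Dom a r ->
  I_line n P Q a r = sumR (S n) (fun i => sumR (S (n - i)) (fun j => - Q i j * F a i (S j) r - P i j * F a (S i) j r)).
Proof. intros D. unfold I_line.
  rewrite (RInt_ext' _ (fun th => sumR (S n) (fun i => sumR (S (n-i)) (fun j => (- Q i j) * fF a i (S j) r th - P i j * fF a (S i) j r th)))).
  rewrite (RInt_sumR (S n) (fun i th => sumR (S (n-i)) (fun j => (- Q i j) * fF a i (S j) r th - P i j * fF a (S i) j r th))).
 
  apply sumR_ext; intros i Hi.
  rewrite (RInt_sumR (S (n-i)) (fun j th => (- Q i j) * fF a i (S j) r th - P i j * fF a (S i) j r th)).
  apply sumR_ext; intros j Hj. rewrite RInt_minus', (RInt_scal' (fun th => fF a i (S j) r th)), (RInt_scal' (fun th => fF a (S i) j r th)). reflexivity.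
  1,2: apply ex_fF; auto.
  1,2: apply ex_scal'; apply ex_fF; auto.
  intros; apply ex_minus'; apply ex_scal'; apply ex_fF; auto.
  intros; apply ex_RInt_sumR; intros; apply ex_minus'; apply ex_scal'; apply ex_fF; auto.
  intros th _. unfold poly2_eval. unfold Rdiv at 1. rewrite sumR_comb. apply sumR_ext; intros i Hi.
  rewrite sumR_comb. apply sumR_ext; intros j Hj. unfold fF. simpl pow. unfold Rdiv. ring.
Qed.

Theorem proposition2p3 :
  forall (K n : nat) (P Q : nat -> nat -> R) (a : list R),
    (1 <= K)%nat -> length a = K -> NoDup a ->
    (forall aj, In aj a -> aj <> 0) ->
    exists (S : nat -> nat -> R) (T : nat -> R),
      forall r : R, 0 < r -> (forall aj, In aj a -> r < Rabs aj) ->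
        I_line n P Q a r =
          sumR (length (abs_values a))
            (fun j => poly_eval ((n + 1) / 2) (S j) (r ^ 2)
                      / sqrt ((nth j (abs_values a) 0) ^ 2 - r ^ 2))
          + poly_eval (n / 2) T (r ^ 2).
Proof.
  intros K n P Q a HK Hl Hd Hnz.
  assert (Hn : a <> nil). { intro E; subst a; simpl in Hl; lia. }
  assert (G : Good a (Datatypes.S ((n+1)/2)) (Datatypes.S (n/2)) (I_line n P Q a)).
  { apply (Good_ext _ _ _ _ (fun r => sumR (Datatypes.S n) (fun i => sumR (Datatypes.S (n - i))
        (fun j => - Q i j * F a i (Datatypes.S j) r - P i j * F a (Datatypes.S i) j r)))).
    intros; apply I_expand; auto.
    apply Good_sumR; intros i Hi. apply Good_sumR; intros j Hj.
    apply Good_minus; apply Good_scal; apply Good_F; auto; lia. }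
  destruct G as [S [T HG]]. exists S, T. intros r Hr Ha. rewrite HG by (split; auto). reflexivity.
Qed.
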